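(* Let $|\Psi\rangle$ be a normalized state of $N$ qubits given by an open MPS in canonical Vidal form $\{\Gamma^{[i]},\Lambda^{[j]}\}$, fix a positive integer $\chi'$, let $|\tilde{\Psi}_{T}\rangle$ be the parallel-compressed MPS and $n=\big\||\tilde{\Psi}_{T}\rangle\big\|$. For $i=1,\dots,N-1$ let $\epsilon_i(\chi')=\sum_{\alpha>\chi'}(\Lambda^{[i]}_{\alpha\alpha})^2$, $\epsilon(\chi')=\sum_{i=1}^{N-1}\epsilon_i(\chi')$, $\nu_i=[1-\epsilon_i(\chi')]^{-1/2}$, and define the stabilized norm $n^*=n\prod_{i=1}^{N-1}\nu_i$. Then $$n^*_{\mathrm{lower}}\le n^*\le n^*_{\mathrm{upper}},\qquad n^*_{\mathrm{lower}}=\Big(1-\sqrt{2\epsilon(\chi')}\Big)\prod_{i=1}^{N-1}\nu_i,\quad n^*_{\mathrm{upper}}=\prod_{i=1}^{N-1}\nu_i,$$ with $n^*_{\mathrm{lower}}\le 1$ and $n^*_{\mathrm{upper}}\ge 1$. Moreover, $n^*_{\mathrm{lower}}$ and $n^*_{\mathrm{upper}}$ converge to $1$ uniformly as $\epsilon(\chi')\to 0$ (i.e., for every $\delta>0$ there is $\eta>0$, independent of $N$ and of the MPS, such that $\epsilon(\chi')<\eta$ implies $|n^*_{\mathrm{lower}}-1|<\delta$ and $|n^*_{\mathrm{upper}}-1|<\delta$).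
   Context: An open MPS in Vidal form on $N$ sites with local dimension $d$ (here $d=2$) consists of tensors $\Gamma^{[i]\sigma_i}$ ($i=1,\dots,N$), each a $\chi_{i-1}\times\chi_i$ matrix for fixed $\sigma_i$, and real diagonal $\chi_i\times\chi_i$ matrices $\Lambda^{[i]}$ ($i=0,\dots,N$) with nonnegative diagonal entries in descending order, $\chi_0=\chi_N=1$, $\Lambda^{[0]}=\Lambda^{[N]}=(1)$, representing $|\Psi\rangle=\sum_{\sigma}\mathrm{Tr}(\Lambda^{[0]}\Gamma^{[1]\sigma_1}\Lambda^{[1]}\cdots\Lambda^{[N-1]}\Gamma^{[N]\sigma_N}\Lambda^{[N]})|\sigma_1\cdots\sigma_N\rangle$. Canonical form means: for every $i$, with $A^{[i]\sigma}=\Lambda^{[i-1]}\Gamma^{[i]\sigma}$ and $B^{[i]\sigma}=\Gamma^{[i]\sigma}\Lambda^{[i]}$, $\sum_\sigma (A^{[i]\sigma})^\dagger A^{[i]\sigma}=I_{\chi_i}$ and $\sum_\sigma B^{[i]\sigma}(B^{[i]\sigma})^\dagger=I_{\chi_{i-1}}$; then $\sum_\alpha(\Lambda^{[i]}_{\alpha\alpha})^2=1$ for each $i$ (so $\epsilon_i(\chi')<1$ when $\chi'\ge1$). $P_i$ is the projector onto the first $\min(\chi',\chi_i)$ standard basis vectors of the bond-$i$ space, and the parallel-compressed state is $|\tilde{\Psi}_{T}\rangle=\sum_{\sigma}\mathrm{Tr}(\Lambda^{[0]}\Gamma^{[1]\sigma_1}P_1\Lambda^{[1]}\Gamma^{[2]\sigma_2}\cdots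 P_{N-1}\Lambda^{[N-1]}\Gamma^{[N]\sigma_N}\Lambda^{[N]})|\sigma_1\cdots\sigma_N\rangle$. Empty sums are zero. *)

(* Defs.v *)
From mathcomp Require Import all_boot all_order all_algebra.
Set Implicit Arguments. Unset Strict Implicit. Unset Printing Implicit Defensive.
Import Order.TTheory GRing.Theory Num.Theory.
Local Open Scope ring_scope.

(* Sites are numbered 0..N-1
   (paper: 1..N) and bonds 0..N (as in the paper).
   - chi k        : bond dimension chi_k
   - Gamma k s    : Gamma^{[k+1] s}, a chi_k x chi_{k+1} matrix
   - lam k        : the diagonal of Lambda^{[k]} (row vector of size chi_k) *)
Section MPS.
Variable C : numClosedFieldType.
Variable N : nat.
Variable chi : nat -> nat.
Variable Gamma : forall k : nat, 'I_2 -> 'M[C]_(chi k, chi k.+1).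
Variable lam : forall k : nat, 'rV[C]_(chi k).

Definition Lam k : 'M[C]_(chi k) := diag_mx (lam k).

Definition adj m n (A : 'M[C]_(m, n)) : 'M[C]_(n, m) := map_mx (fun x => x^*) A^T.

Definition vidal_canonical : Prop :=
  chi 0 = 1%N /\ chi N = 1%N /\
  (forall j, lam 0 0 j = 1) /\ (forall j, lam N 0 j = 1) /\
  (forall k (a : 'I_(chi k)), (k <= N)%N -> 0 <= lam k 0 a) /\
  (forall k (a b : 'I_(chi k)), (k <= N)%N -> (a <= b)%N -> lam k 0 b <= lam k 0 a) /\
  (forall k, (k < N)%N ->
     \sum_(s < 2) adj (Lam k *m Gamma k s) *m (Lam k *m Gamma k s) = 1%:M /\
     \sum_(s < 2) (Gamma k s *m Lam k.+1) *m adj (Gamma k s *m Lam k.+1) = 1%:M).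

Fixpoint pref (P : forall k, 'M[C]_(chi k)) (s : nat -> 'I_2) (k : nat)
  : 'M[C]_(chi 0, chi k) :=
  match k as k0 return 'M[C]_(chi 0, chi k0) with
  | 0 => Lam 0
  | k'.+1 => pref P s k' *m Gamma k' (s k') *m P k'.+1 *m Lam k'.+1
  end.

Definition ext_conf (sigma : {ffun 'I_N -> 'I_2}) (k : nat) : 'I_2 :=
  match (insub k : option 'I_N) with Some i => sigma i | None => ord0 end.

(* Amplitude: the trace of the (1 x 1, since chi_0 = chi_N = 1) product. *)
Definition amp (P : forall k, 'M[C]_(chi k)) (sigma : {ffun 'I_N -> 'I_2}) : C :=
  \sum_(a < chi 0) \sum_(b < chi N) pref P (ext_conf sigma) N a b.

Definition norm2 (P : forall k, 'M[C]_(chi k)) : C :=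
  \sum_(sigma : {ffun 'I_N -> 'I_2}) `|amp P sigma| ^+ 2.

Definition id_bonds : forall k, 'M[C]_(chi k) := fun k => 1%:M.

Definition trunc_proj (chi' : nat) : forall k, 'M[C]_(chi k) := fun k =>
  diag_mx (\row_(j < chi k)
    (if (0 < k < N)%N && (chi' <= j)%N then 0 else 1)).

(* epsilon_i(chi') = sum_{alpha > chi'} Lambda^[i]_{alpha alpha}^2 (1-based alpha) *)
Definition eps_i (chi' k : nat) : C :=
  \sum_(a < chi k | (chi' <= a)%N) (lam k 0 a) ^+ 2.
Definition eps_tot (chi' : nat) : C := \sum_(1 <= k < N) eps_i chi' k.
Definition nu (chi' k : nat) : C := (sqrtC (1 - eps_i chi' k))^-1.
Definition n_upper (chi' : nat) : C := \prod_(1 <= k < N) nu chi' k.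
Definition n_lower (chi' : nat) : C := (1 - sqrtC (2 * eps_tot chi')) * n_upper chi'.
Definition n_T (chi' : nat) : C := sqrtC (norm2 (trunc_proj chi')).
Definition n_star (chi' : nat) : C := n_T chi' * n_upper chi'.

End MPS.

(* Main.v *)
Require Import Defs.
From mathcomp Require Import all_boot all_order all_algebra.
From Stdlib Require Import FunctionalExtensionality.
From mathcomp Require Import ring.
Set Implicit Arguments. Unset Strict Implicit. Unset Printing Implicit Defensive.
Import Order.TTheory GRing.Theory Num.Theory.
Local Open Scope ring_scope.
Section Sumc.
Variable V : nmodType.

Definition upd (s : nat -> 'I_2) (k : nat) (x : 'I_2) : nat -> 'I_2 :=
  fun j => if j == k then x else s j.

Fixpoint sumc (i d : nat) (s : nat -> 'I_2) (F : (nat -> 'I_2) -> V) : V :=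
  match d with
  | 0 => F s
  | d'.+1 => \sum_(x < 2) sumc i.+1 d' (upd s i x) F
  end.

Lemma sumcS i d s F :
  sumc i d.+1 s F = sumc i d s (fun s' => \sum_(x < 2) F (upd s' (i + d) x)).
Proof.
elim: d i s => [|d IH] i s; first by rewrite /= addn0.
rewrite [LHS]/=. rewrite [RHS]/=.
apply: eq_bigr => x _.
by transitivity (sumc i.+1 d.+1 (upd s i x) F); [by [] | rewrite IH addSnnS].
Qed.

Lemma sumc_sum i d s (F : 'I_2 -> (nat -> 'I_2) -> V) :
  sumc i d s (fun s' => \sum_(x < 2) F x s') = \sum_(x < 2) sumc i d s (F x).
Proof.
elim: d i s => [|d IH] i s //=.
rewrite (exchange_big). apply: eq_bigr => y _. by rewrite IH.
Qed.

Lemma sumc_ext i d s F G : (forall s, F s = G s) -> sumc i d s F = sumc i d s G.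
Proof. move=> FG; elim: d i s => [|d IH] i s /=; first exact: FG.
by apply: eq_bigr => x _; rewrite IH. Qed.

End Sumc.

Lemma sumc_morph (V W : nmodType) (f : V -> W) i d s F :
  f 0 = 0 -> (forall a b, f (a + b) = f a + f b) ->
  f (sumc i d s F) = sumc i d s (fun s' => f (F s')).
Proof.
move=> f0 fD; elim: d i s => [|d IH] i s //=.
rewrite (big_morph f fD f0). by apply: eq_bigr => x _; rewrite IH.
Qed.



Section SumcNum.
Variable R : numDomainType.

Lemma sumc_le i d s (F G : (nat -> 'I_2) -> R) :
  (forall s, F s <= G s) -> sumc i d s F <= sumc i d s G.
Proof. move=> FG; elim: d i s => [|d IH] i s /=; first exact: FG.
by apply: ler_sum => x _; apply: IH. Qed.

Lemma sumc_norm i d s (F : (nat -> 'I_2) -> R) :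
  `|sumc i d s F| <= sumc i d s (fun s => `|F s|).
Proof. elim: d i s => [|d IH] i s /=; first by [].
apply: le_trans (ler_norm_sum _ _ _) _.
by apply: ler_sum => x _; apply: IH. Qed.

End SumcNum.

Lemma sumcD (V : nmodType) i d s (F G : (nat -> 'I_2) -> V) :
  sumc i d s (fun s => F s + G s) = sumc i d s F + sumc i d s G.
Proof.
elim: d i s => [|d IH] i s //=.
rewrite -big_split /=; apply: eq_bigr => x _; exact: IH.
Qed.

Definition fill (s : nat -> 'I_2) (i n : nat) (t : {ffun 'I_n -> 'I_2}) : nat -> 'I_2 :=
  fun j => if (i <= j)%N then (if insub (j - i)%N is Some k then t k else s j) else s j.

Definition consf n (x : 'I_2) (t : {ffun 'I_n -> 'I_2}) : {ffun 'I_n.+1 -> 'I_2} :=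
  [ffun j => if unlift ord0 j is Some j' then t j' else x].

Lemma sum_ffunS (V : nmodType) n (H : {ffun 'I_n.+1 -> 'I_2} -> V) :
  \sum_(t : {ffun 'I_n.+1 -> 'I_2}) H t =
  \sum_(x < 2) \sum_(t : {ffun 'I_n -> 'I_2}) H (consf x t).
Proof.
rewrite pair_big /=.
rewrite (reindex (fun p : 'I_2 * {ffun 'I_n -> 'I_2} => consf p.1 p.2)) //.
exists (fun t : {ffun 'I_n.+1 -> 'I_2} => (t ord0, [ffun j => t (lift ord0 j)])).
- move=> [x t] _ /=; congr pair; first by rewrite ffunE unlift_none.
  by apply/ffunP => j; rewrite !ffunE liftK.
- move=> t _ /=; apply/ffunP => j; rewrite ffunE.
  by case: unliftP => [j' ->|->]; rewrite ?ffunE.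
Qed.

Lemma fill_consf s i n x (t : {ffun 'I_n -> 'I_2}) :
  fill s i (consf x t) = fill (upd s i x) i.+1 t.
Proof.
apply: functional_extensionality => j; rewrite /fill /upd.
case: (ltngtP j i) => [lt|gt|->].
- by [].
- 
  have e : (j - i = (j - i.+1).+1)%N by rewrite subnSK.
  rewrite e. move: (j - i.+1)%N => m.
  case: (ltnP m n) => b.
  + have b' : (m.+1 < n.+1)%N by [].
    rewrite (insubT (fun m => m < n.+1)%N b') (insubT (fun m => m < n)%N b) /=.
    rewrite ffunE.
    have -> : unlift ord0 (Sub m.+1 b' : 'I_n.+1) = Some (Sub m b : 'I_n).
      have -> : (Sub m.+1 b' : 'I_n.+1) = lift ord0 (Sub m b : 'I_n).
        by apply: val_inj.
      by rewrite liftK.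
    by [].
  + rewrite insubF; last by rewrite ltnS ltnNge b.
    by rewrite insubF // ltnNge b.
- rewrite subnn.
  rewrite (insubT (fun m => m < n.+1)%N (ltn0Sn n)) /= ffunE.
  by case: unliftP => // j' /(congr1 val).
Qed.

Lemma sum_fill (V : nmodType) n i s (G : (nat -> 'I_2) -> V) :
  \sum_(t : {ffun 'I_n -> 'I_2}) G (fill s i t) = sumc i n s G.
Proof.
elim: n i s => [|n IH] i s /=.
  rewrite (big_pred1 [ffun j : 'I_0 => ord0 : 'I_2]); last first.
    by move=> t /=; symmetry; apply/eqP/ffunP => -[].
  congr G; apply: functional_extensionality => j; rewrite /fill.
  by case: ifP => // _; rewrite insubF.
rewrite sum_ffunS; apply: eq_bigr => x _.
rewrite -IH; apply: eq_bigr => t _; by rewrite fill_consf.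
Qed.

Section MPSWork.
Variable C : numClosedFieldType.
Variable N : nat.
Variable chi : nat -> nat.
Variable Gamma : forall k : nat, 'I_2 -> 'M[C]_(chi k, chi k.+1).
Variable lam : forall k : nat, 'rV[C]_(chi k).

Definition Am k x : 'M[C]_(chi k, chi k.+1) := Lam lam k *m Gamma k x.

Fixpoint Qp (P : forall k, 'M[C]_(chi k)) (s : nat -> 'I_2) k : 'M[C]_(chi 0, chi k) :=
  match k with
  | 0 => 1%:M
  | k'.+1 => Qp P s k' *m Am k' (s k') *m P k'.+1
  end.

Lemma pref_Qp P s k : pref Gamma lam P s k = Qp P s k *m Lam lam k.
Proof.
elim: k => [|k IH] /=; first by rewrite mul1mx.
by rewrite IH /Am !mulmxA.
Qed.

Lemma Qp_ext P s s' k : (forall j, (j < k)%N -> s j = s' j) -> Qp P s k = Qp P s' k.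
Proof.
elim: k => [|k IH] H //=.
rewrite IH ?H // => j jk; apply: H; exact: ltnW.
Qed.

Lemma Qp_upd P s k x : Qp P (upd s k x) k = Qp P s k.
Proof. by apply: Qp_ext => j jk; rewrite /upd ltn_eqF. Qed.

Definition vnorm2 n (v : 'cV[C]_n) : C := \sum_a `|v a 0| ^+ 2.

Lemma vnorm2_ge0 n (v : 'cV[C]_n) : 0 <= vnorm2 v.
Proof. by apply: sumr_ge0 => a _; apply: exprn_ge0. Qed.

Lemma vnorm2E n (v : 'cV[C]_n) : vnorm2 v = (adj v *m v) 0 0.
Proof.
rewrite /vnorm2 mxE; apply: eq_bigr => a _.
by rewrite normCK /adj !mxE mulrC.
Qed.

Lemma adjM m n p (X : 'M[C]_(m, n)) (Y : 'M[C]_(n, p)) :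
  adj (X *m Y) = adj Y *m adj X.
Proof. by rewrite /adj trmx_mul map_mxM. Qed.

Lemma adjK m n (X : 'M[C]_(m, n)) : adj (adj X) = X.
Proof. by apply/matrixP => i j; rewrite /adj !mxE conjCK. Qed.

Lemma adjD m n (X Y : 'M[C]_(m, n)) : adj (X + Y) = adj X + adj Y.
Proof. by apply/matrixP => i j; rewrite /adj !mxE rmorphD. Qed.

Lemma adj0 m n : adj (0 : 'M[C]_(m, n)) = 0.
Proof. by apply/matrixP => i j; rewrite /adj !mxE conjC0. Qed.

Lemma adj1 n : adj (1%:M : 'M[C]_n) = 1%:M.
Proof. by apply/matrixP => i j; rewrite /adj !mxE eq_sym; case: eqP; rewrite ?conjC1 ?conjC0. Qed.

Definition s0 : nat -> 'I_2 := fun _ => ord0.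

End MPSWork.

Section Canon.
Variable C : numClosedFieldType.
Variable N : nat.
Variable chi : nat -> nat.
Variable Gamma : forall k : nat, 'I_2 -> 'M[C]_(chi k, chi k.+1).
Variable lam : forall k : nat, 'rV[C]_(chi k).
Hypothesis Hcan : vidal_canonical N Gamma lam.

Notation A := (Am Gamma lam).
Notation L := (Lam lam).

Lemma can_pos k a : (k <= N)%N -> 0 <= lam k 0 a.
Proof. by case: Hcan => _ [_ [_ [_ [H _]]]]; apply: H. Qed.

Lemma can_left k : (k < N)%N -> \sum_(x < 2) adj (A k x) *m A k x = 1%:M.
Proof. by case: Hcan => _ [_ [_ [_ [_ [_ H]]]]] kN; case: (H k kN). Qed.

Lemma can_right k : (k < N)%N ->
  \sum_(x < 2) (Gamma k x *m L k.+1) *m adj (Gamma k x *m L k.+1) = 1%:M.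
Proof. by case: Hcan => _ [_ [_ [_ [_ [_ H]]]]] kN; case: (H k kN). Qed.

Lemma adjL k : (k <= N)%N -> adj (L k) = L k.
Proof.
move=> kN; apply/matrixP => i j; rewrite /adj /Lam !mxE.
case: (eqVneq i j) => [->|ne]; first by rewrite mulr1n geC0_conj // can_pos.
by rewrite !mulr0n conjC0.
Qed.

Lemma sum_vnorm2_A k (w : 'M[C]_(chi k.+1, 1)) : (k < N)%N ->
  \sum_(x < 2) vnorm2 (A k x *m w) = vnorm2 w.
Proof.
move=> kN.
rewrite vnorm2E.
under eq_bigr => x _ do rewrite vnorm2E adjM.
rewrite -summxE.
have -> : \sum_(x < 2) adj w *m adj (A k x) *m (A k x *m w)
        = adj w *m (\sum_(x < 2) adj (A k x) *m A k x) *m w.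
  rewrite mulmx_sumr mulmx_suml; apply: eq_bigr => x _.
  by rewrite !mulmxA.
by rewrite can_left // mulmx1.
Qed.

Lemma right_sum k : (k < N)%N ->
  \sum_(x < 2) A k x *m L k.+1 *m L k.+1 *m adj (A k x) = L k *m L k.
Proof.
move=> kN.
have -> : \sum_(x < 2) A k x *m L k.+1 *m L k.+1 *m adj (A k x)
   = L k *m (\sum_(x < 2) (Gamma k x *m L k.+1) *m adj (Gamma k x *m L k.+1)) *m L k.
  rewrite mulmx_sumr mulmx_suml; apply: eq_bigr => x _.
  rewrite /Am !adjM adjL ?(ltnW kN) // adjL //.
  by rewrite !mulmxA.
by rewrite can_right // mulmx1.
Qed.

Lemma tr_sum n (F : 'I_2 -> 'M[C]_n) :
  \sum_(x < 2) \tr (F x) = \tr (\sum_(x < 2) F x).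
Proof. by rewrite linear_sum. Qed.

Lemma tr_invariant k (X : 'M[C]_(chi k)) : (k < N)%N ->
  \tr (L k.+1 *m (\sum_(x < 2) adj (A k x) *m X *m A k x) *m L k.+1)
  = \tr (L k *m X *m L k).
Proof.
move=> kN.
rewrite mulmx_sumr mulmx_suml linear_sum /=.
have -> : \sum_(x < 2) \tr (L k.+1 *m (adj (A k x) *m X *m A k x) *m L k.+1)
   = \sum_(x < 2) \tr ((A k x *m L k.+1 *m L k.+1 *m adj (A k x)) *m X).
  apply: eq_bigr => x _.
  move: (A k x) (adj (A k x)) => a b.
  by rewrite !mulmxA mxtrace_mulC !mulmxA mxtrace_mulC !mulmxA.
rewrite tr_sum -mulmx_suml right_sum //.
by rewrite [RHS]mxtrace_mulC mulmxA.
Qed.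



Lemma trLXL k (X : 'M[C]_(chi k)) :
  \tr (L k *m X *m L k) = \sum_a lam k 0 a ^+ 2 * X a a.
Proof.
rewrite /mxtrace; apply: eq_bigr => a _.
rewrite /Lam mul_mx_diag mul_diag_mx !mxE.
by rewrite mulrC mulrA -expr2 mulrC.
Qed.

Lemma can_chi0 : chi 0 = 1%N.
Proof. by case: Hcan. Qed.
Lemma can_chiN : chi N = 1%N.
Proof. by case: Hcan => _ []. Qed.
Lemma can_lam0 j : lam 0 0 j = 1.
Proof. by case: Hcan => _ [_ [H _]]. Qed.
Lemma can_lamN j : lam N 0 j = 1.
Proof. by case: Hcan => _ [_ [_ [H _]]]. Qed.
Lemma can_desc k (a b : 'I_(chi k)) : (k <= N)%N -> (a <= b)%N -> lam k 0 b <= lam k 0 a.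
Proof. by case: Hcan => _ [_ [_ [_ [_ [H _]]]]]; apply: H. Qed.

Lemma sum_lam2 k : (k <= N)%N -> \sum_a lam k 0 a ^+ 2 = 1.
Proof.
elim: k => [|k IH] kN.
  under eq_bigr => a _ do rewrite can_lam0 expr1n.
  by rewrite sumr_const card_ord can_chi0.
have kN' : (k < N)%N by [].
have := tr_invariant 1%:M kN'.
rewrite !trLXL.
have -> : \sum_(x < 2) adj (A k x) *m 1%:M *m A k x = 1%:M.
  by rewrite -(can_left kN'); apply: eq_bigr => x _; rewrite mulmx1.
under eq_bigr => a _ do rewrite mxE eqxx mulr1.
move=> ->.
under eq_bigr => a _ do rewrite mxE eqxx mulr1.
exact: IH (ltnW kN').
Qed.

Lemma contrA P k s : (k < N)%N ->
  (forall c : 'cV[C]_(chi k), sumc 0 k s (fun s => vnorm2 (Qp Gamma lam P s k *m c)) <= vnorm2 c) ->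
  forall w : 'cV[C]_(chi k.+1),
  sumc 0 k.+1 s (fun s => vnorm2 (Qp Gamma lam P s k *m (A k (s k) *m w))) <= vnorm2 w.
Proof.
move=> kN IH w.
rewrite sumcS add0n.
rewrite (sumc_ext _ _ _ (G := fun s' => \sum_(x < 2) vnorm2 (Qp Gamma lam P s' k *m (A k x *m w)))); last first.
  by move=> s'; apply: eq_bigr => x _; rewrite Qp_upd /upd eqxx.
rewrite sumc_sum -(sum_vnorm2_A w kN).
by apply: ler_sum => x _; apply: IH.
Qed.

Lemma contr P s :
  (forall j (v : 'cV[C]_(chi j)), (0 < j <= N)%N -> vnorm2 (P j *m v) <= vnorm2 v) ->
  forall k, (k <= N)%N -> forall c : 'cV[C]_(chi k),
  sumc 0 k s (fun s => vnorm2 (Qp Gamma lam P s k *m c)) <= vnorm2 c.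
Proof.
move=> HP; elim=> [|k IH] kN c.
  by rewrite /= mul1mx.
have kN' : (k < N)%N by [].
apply: le_trans (HP k.+1 c _); last by rewrite kN.
rewrite (sumc_ext _ _ _ (G := fun s => vnorm2 (Qp Gamma lam P s k *m (A k (s k) *m (P k.+1 *m c))))); last first.
  by move=> s'; rewrite /= !mulmxA.
exact: (contrA kN' (IH (ltnW kN'))).
Qed.

Notation Id := (id_bonds C chi).

Definition Mk P k : 'M[C]_(chi k) :=
  sumc 0 k s0 (fun s => adj (Qp Gamma lam Id s k) *m Qp Gamma lam P s k).
Definition Ek P k : 'M[C]_(chi k.+1) :=
  sumc 0 k.+1 s0 (fun s => adj (Qp Gamma lam Id s k *m A k (s k)) *m (Qp Gamma lam P s k *m A k (s k))).
Definition gk P k : C := \tr (L k *m Mk P k *m L k).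

Lemma Mk_succ P k : Mk P k.+1 = Ek P k *m P k.+1.
Proof.
rewrite /Ek (sumc_morph (f := fun X => X *m P k.+1)); last 2 first.
- by rewrite mul0mx.
- by move=> a b; rewrite mulmxDl.
apply: sumc_ext => s /=.
by rewrite /id_bonds mulmx1 !mulmxA.
Qed.

Lemma Ek_eq P k : Ek P k = \sum_(x < 2) adj (A k x) *m Mk P k *m A k x.
Proof.
rewrite /Ek sumcS add0n.
rewrite (sumc_ext _ _ _ (G := fun s' => \sum_(x < 2) adj (A k x) *m
          (adj (Qp Gamma lam Id s' k) *m Qp Gamma lam P s' k) *m A k x)); last first.
  move=> s'; apply: eq_bigr => x _.
  by rewrite !Qp_upd /upd eqxx adjM !mulmxA.
rewrite sumc_sum; apply: eq_bigr => x _.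
rewrite /Mk (sumc_morph (f := fun X => adj (A k x) *m X *m A k x)) //.
- by rewrite mulmx0 mul0mx.
- by move=> a b; rewrite mulmxDr mulmxDl.
Qed.

Lemma g_step P k (p : 'rV[C]_(chi k.+1)) : (k < N)%N -> P k.+1 = diag_mx p ->
  gk P k - gk P k.+1 = \sum_a lam k.+1 0 a ^+ 2 * (1 - p 0 a) * Ek P k a a.
Proof.
move=> kN Pp.
rewrite /gk -(tr_invariant _ kN) -Ek_eq Mk_succ Pp !trLXL -sumrB.
apply: eq_bigr => a _.
rewrite mul_mx_diag mxE.
by ring.
Qed.

Lemma col_delta n m (M : 'M[C]_(n, m)) (b : 'I_m) a : (M *m (delta_mx b (0 : 'I_1))) a 0 = M a b.
Proof. by rewrite -colE mxE. Qed.

Lemma vnorm2_delta n (b : 'I_n) : vnorm2 (delta_mx b 0 : 'cV[C]_n) = 1.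
Proof.
rewrite /vnorm2 (bigD1 b) //= big1 => [|a neq].
  by rewrite mxE !eqxx /= normr1 expr1n addr0.
by rewrite mxE (negbTE neq) /= normr0 expr0n.
Qed.

Lemma amgm (u v : C) : (1 + 1) * `|u^* * v| <= `|u| ^+ 2 + `|v| ^+ 2.
Proof.
rewrite normrM norm_conjC.
have R : `|u| - `|v| \is Num.real by rewrite rpredB // normr_real.
have := real_normK R.
have : 0 <= `| `|u| - `|v| | ^+ 2 by rewrite exprn_ge0.
move=> H1 H2; rewrite H2 sqrrB in H1.
rewrite -subr_ge0; apply: (le_trans H1); rewrite le_eqVlt; apply/orP; left; apply/eqP.
by rewrite mulr2n; ring.
Qed.



Definition contractive (P : forall k, 'M[C]_(chi k)) :=
  forall j (v : 'cV[C]_(chi j)), (0 < j <= N)%N -> vnorm2 (P j *m v) <= vnorm2 v.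

Lemma Id_contr : contractive Id.
Proof. by move=> j v _; rewrite /id_bonds mul1mx. Qed.

Lemma Ek_bound P k a : (k < N)%N -> contractive P -> `|Ek P k a a| <= 1.
Proof.
move=> kN HP.
set U := fun s => Qp Gamma lam Id s k *m A k (s k).
set V := fun s => Qp Gamma lam P s k *m A k (s k).
have e : Ek P k a a = sumc 0 k.+1 s0 (fun s => \sum_a0 (U s a0 a)^* * V s a0 a).
  rewrite /Ek (sumc_morph (f := fun X : 'M[C]_(chi k.+1) => X a a)); last 2 first.
  - by rewrite mxE.
  - by move=> X Y; rewrite mxE.
  apply: sumc_ext => s; rewrite mxE; apply: eq_bigr => j _.
  by rewrite /adj !mxE.
have hU := contrA kN (contr s0 Id_contr (ltnW kN)) (delta_mx a 0).
have hV := contrA kN (contr s0 HP (ltnW kN)) (delta_mx a 0).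
rewrite vnorm2_delta in hU hV.
have h2 : 2 * `|Ek P k a a| <= 2.
  rewrite e.
  have -> : (2 : C) = 1 + 1 by [].
  apply: le_trans (lerD hU hV).
  rewrite -sumcD.
  have H0 : (0 : C) <= 1 + 1 by rewrite addr_ge0 ?ler01.
  apply: le_trans (ler_wpM2l H0 (sumc_norm 0 k.+1 s0 _)) _.
  rewrite (sumc_morph (f := fun x : C => (1 + 1) * x)); [ | by rewrite mulr0 | by move=> x y; rewrite mulrDr].
  apply: sumc_le => s.
  apply: le_trans (ler_wpM2l H0 (ler_norm_sum _ _ _)) _.
  rewrite /vnorm2 -big_split /= mulr_sumr.
  apply: ler_sum => a0 _.
  rewrite !mulmxA !col_delta.
  by rewrite /U /V /Am !mulmxA; apply: amgm.
by rewrite -[X in _ <= X]mulr1 ler_pM2l // in h2.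
Qed.

Variable chi' : nat.
Notation T := (trunc_proj C N chi chi').

Lemma T_contr : contractive T.
Proof.
move=> j v _; rewrite /vnorm2 /trunc_proj mul_diag_mx; apply: ler_sum => a _.
rewrite !mxE; case: ifP => _; first by rewrite mul0r normr0 expr0n exprn_ge0.
by rewrite mul1r.
Qed.

Lemma g_bound k : (k < N)%N ->
  `|gk T k - gk T k.+1| <= (if (k.+1 < N)%N then eps_i lam chi' k.+1 else 0).
Proof.
move=> kN.
rewrite (g_step (p := \row_(j < chi k.+1) (if (0 < k.+1 < N)%N && (chi' <= j)%N then 0 else 1))) //.
apply: le_trans (ler_norm_sum _ _ _) _.
case: ifP => kN1.
  rewrite /eps_i [in X in _ <= X]big_mkcond /=; apply: ler_sum => a _.
  rewrite mxE /=.
  case: ifP => _; last by rewrite subrr mulr0 mul0r normr0.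
  rewrite subr0 mulr1 normrM ger0_norm; last by rewrite exprn_ge0 // can_pos.
  rewrite -[X in _ <= X]mulr1; apply: ler_wpM2l; first by rewrite exprn_ge0 // can_pos.
  exact: Ek_bound kN T_contr.
rewrite big1 ?normr0 // => a _.
by rewrite mxE /= subrr mulr0 mul0r normr0.
Qed.

Lemma g0 P : gk P 0 = 1.
Proof.
rewrite /gk /Mk /= adj1 mulmx1 trLXL -[RHS](sum_lam2 (leq0n N)).
by apply: eq_bigr => a _; rewrite mxE eqxx mulr1.
Qed.

Lemma g_tele k : (k <= N)%N ->
  `|1 - gk T k| <= \sum_(1 <= j < k.+1) (if (j < N)%N then eps_i lam chi' j else 0).
Proof.
elim: k => [|k IH] kN.
  by rewrite g0 subrr normr0 big_geq.
rewrite big_nat_recr //=.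
have -> : 1 - gk T k.+1 = (1 - gk T k) + (gk T k - gk T k.+1) by rewrite addrA subrK.
apply: le_trans (ler_normD _ _) _.
apply: lerD; first exact: IH (ltnW kN).
exact: g_bound.
Qed.

Lemma g_teleN : `|1 - gk T N| <= eps_tot N lam chi'.
Proof.
apply: le_trans (g_tele (leqnn N)) _.
case: N => [|n]; first by rewrite big_geq // /eps_tot big_geq.
rewrite big_nat_recr //= ltnn addr0 /eps_tot le_eqVlt; apply/orP; left; apply/eqP.
by apply: eq_big_nat => j /andP [_ ->].
Qed.



Lemma big_one n (G : 'I_n -> C) (a0 : 'I_n) : n = 1%N -> \sum_a G a = G a0.
Proof.
move=> n1; rewrite (big_pred1 a0) // => a /=; symmetry; apply/eqP/val_inj.
have h1 : (val a < 1)%N by rewrite -n1 ltn_ord.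
have h2 : (val a0 < 1)%N by rewrite -n1 ltn_ord.
move: h1 h2; rewrite /=; case: (nat_of_ord a) => [|x] //; case: (nat_of_ord a0) => [|y] //.
Qed.

Lemma norm2_sumc P (a0 : 'I_(chi 0)) (b0 : 'I_(chi N)) :
  norm2 N Gamma lam P = sumc 0 N s0 (fun s => `|Qp Gamma lam P s N a0 b0| ^+ 2).
Proof.
rewrite /norm2 /amp.
transitivity (sumc 0 N s0
   (fun s => `|\sum_a \sum_b pref Gamma lam P s N a b| ^+ 2)).
  rewrite -sum_fill; apply: eq_bigr => sigma _ /=.
  have -> : ext_conf sigma = fill s0 0 sigma; last by [].
  apply: functional_extensionality => j; by rewrite /ext_conf /fill leq0n subn0.
apply: sumc_ext => s.
rewrite (big_one _ a0 can_chi0) (big_one _ b0 can_chiN) pref_Qp /Lam mul_mx_diag mxE.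
by rewrite can_lamN mulr1.
Qed.

Lemma gN_entry P (a0 : 'I_(chi 0)) (b0 : 'I_(chi N)) :
  gk P N = sumc 0 N s0 (fun s => (Qp Gamma lam Id s N a0 b0)^* * Qp Gamma lam P s N a0 b0).
Proof.
rewrite /gk trLXL (big_one _ b0 can_chiN) can_lamN expr1n mul1r.
rewrite /Mk (sumc_morph (f := fun X : 'M[C]_(chi N) => X b0 b0)); last 2 first.
- by rewrite mxE.
- by move=> X Y; rewrite mxE.
apply: sumc_ext => s; rewrite mxE (big_one _ a0 can_chi0).
by rewrite /adj !mxE.
Qed.

Lemma ord_chi0 : 'I_(chi 0).
Proof. by apply: (@Ordinal _ 0); rewrite can_chi0. Defined.
Lemma ord_chiN : 'I_(chi N).
Proof. by apply: (@Ordinal _ 0); rewrite can_chiN. Defined.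

Lemma norm2_T_le1 : norm2 N Gamma lam T <= 1.
Proof.
rewrite (norm2_sumc _ ord_chi0 ord_chiN).
have := contr s0 T_contr (leqnn N) (delta_mx ord_chiN 0).
rewrite vnorm2_delta; apply: le_trans; apply: sumc_le => s.
rewrite /vnorm2 (big_one _ ord_chi0 can_chi0) col_delta //.
Qed.

Lemma norm2_T_ge : norm2 N Gamma lam Id = 1 ->
  (1 + 1) * (1 - eps_tot N lam chi') <= 1 + norm2 N Gamma lam T.
Proof.
move=> HI.
have H0 : (0 : C) <= 1 + 1 by rewrite addr_ge0 ?ler01.
set g := gk T N.
have h1 : 1 - eps_tot N lam chi' <= `|g|.
  apply: le_trans (_ : 1 - `|1 - g| <= _).
    by rewrite lerD2l lerN2; exact: g_teleN.
  rewrite lerBlDr.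
  have h := ler_normD g (1 - g); rewrite addrC subrK normr1 in h; exact: h.
apply: le_trans (ler_wpM2l H0 h1) _.
have -> : 1 + norm2 N Gamma lam T = norm2 N Gamma lam Id + norm2 N Gamma lam T by rewrite HI.
rewrite (norm2_sumc Id ord_chi0 ord_chiN) (norm2_sumc T ord_chi0 ord_chiN).
rewrite -sumcD /g (gN_entry _ ord_chi0 ord_chiN).
apply: le_trans (ler_wpM2l H0 (sumc_norm 0 N s0 _)) _.
rewrite (sumc_morph (f := fun x : C => (1 + 1) * x)); [ | by rewrite mulr0 | by move=> x y; rewrite mulrDr].
apply: sumc_le => s; exact: amgm.
Qed.



Lemma eps_bounds k : (0 < chi')%N -> (k <= N)%N ->
  0 <= eps_i lam chi' k /\ eps_i lam chi' k < 1.
Proof.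
move=> c0 kN.
have ge0 a : 0 <= lam k 0 a ^+ 2 by rewrite exprn_ge0 // can_pos.
split; first by apply: sumr_ge0 => a _.
have hs := sum_lam2 kN.
rewrite (bigID (fun a : 'I_(chi k) => (chi' <= a)%N)) /= in hs.
rewrite /eps_i -subr_gt0 -hs addrC addrK.
have [e|pos] := posnP (chi k).
  exfalso; move: hs; rewrite !big1 ?addr0 => [/esym/eqP|a|a]; rewrite ?oner_eq0 //;
  by have := leq_trans (ltn_ord a) (eq_leq e).
pose b0 : 'I_(chi k) := Ordinal (n := chi k) (m := 0) pos.
have b0P : ~~ (chi' <= b0)%N by rewrite -ltnNge.
have l0 : 0 < lam k 0 b0 ^+ 2.
  rewrite lt_def ge0 andbT; apply/negP => /eqP z.
  have : \sum_a lam k 0 a ^+ 2 <= \sum_(a < chi k) 0.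
    apply: ler_sum => a _; rewrite -z.
    have la := can_desc (a := b0) (b := a) kN (leq0n _).
    by rewrite !expr2 ler_pM // can_pos.
  by rewrite sum_lam2 // big1 // ler10.
apply: lt_le_trans l0 _.
rewrite (bigD1 b0) //= lerDl; apply: sumr_ge0 => a _; exact: ge0.
Qed.

End Canon.

Section Scalar.
Variable C : numClosedFieldType.

Lemma weier (r : seq nat) (e : nat -> C) : (forall k, k \in r -> 0 <= e k <= 1) ->
  1 - \sum_(k <- r) e k <= \prod_(k <- r) (1 - e k).
Proof.
elim: r => [|x r IH] H; first by rewrite !big_nil subr0.
rewrite !big_cons.
have /andP [h0 h1] := H x (mem_head x r).
have IH' := IH (fun k kr => H k (introT orP (or_intror kr))).
have hs : 0 <= \sum_(k <- r) e k.
  by rewrite big_seq; apply: sumr_ge0 => k kr; case/andP: (H k (introT orP (or_intror kr))).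
apply: le_trans (ler_wpM2l _ IH'); last by rewrite subr_ge0.
have -> : (1 - e x) * (1 - \sum_(k <- r) e k) = 1 - (e x + \sum_(k <- r) e k) + e x * \sum_(k <- r) e k by ring.
by rewrite lerDl mulr_ge0.
Qed.

End Scalar.

Section Scalar2.
Variable C : numClosedFieldType.

Lemma S_props N (e : nat -> C) : (forall k, (1 <= k < N)%N -> 0 <= e k < 1) ->
  [/\ 0 < \prod_(1 <= k < N) sqrtC (1 - e k), \prod_(1 <= k < N) sqrtC (1 - e k) <= 1 &
      1 - \sum_(1 <= k < N) e k <= (\prod_(1 <= k < N) sqrtC (1 - e k)) ^+ 2].
Proof.
move=> H; split.
- rewrite big_nat; apply: prodr_gt0 => k kN; rewrite sqrtC_gt0 subr_gt0.
  by case/andP: (H k kN).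
- rewrite big_nat; apply: prodr_ile1 => k kN; have /andP [h0 h1] := H k kN.
  rewrite sqrtC_ge0 subr_ge0 (ltW h1) /=.
  rewrite -[X in _ <= X]sqrtC1 ler_sqrtC ?nnegrE ?subr_ge0 ?ler01 ?(ltW h1) //.
  by rewrite lerBlDr lerDl.
- rewrite -prodrXl.
  under eq_bigr => k _ do rewrite sqrtCK.
  apply: weier => k; rewrite mem_index_iota => kN.
  by have /andP [h0 h1] := H k kN; rewrite h0 (ltW h1).
Qed.

Lemma sum_e_ge0 N (e : nat -> C) : (forall k, (1 <= k < N)%N -> 0 <= e k < 1) ->
  0 <= \sum_(1 <= k < N) e k.
Proof.
move=> H; rewrite big_nat; apply: sumr_ge0 => k kN.
by case/andP: (H k kN).
Qed.

Lemma lemA N (e : nat -> C) : (forall k, (1 <= k < N)%N -> 0 <= e k < 1) ->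
  1 <= \prod_(1 <= k < N) (sqrtC (1 - e k))^-1 /\
  (1 - sqrtC (2 * \sum_(1 <= k < N) e k)) * \prod_(1 <= k < N) (sqrtC (1 - e k))^-1 <= 1.
Proof.
move=> He.
have [S0 S1 S2] := S_props He.
have eps0 := sum_e_ge0 He.
rewrite prodfV.
move: S0 S1 S2 eps0.
set S := \prod_(1 <= k < N) sqrtC (1 - e k).
set ε := \sum_(1 <= k < N) e k.
set t := sqrtC (2 * ε).
move=> S0 S1 S2 eps0.
have t0 : 0 <= t by rewrite sqrtC_ge0 mulr_ge0 // ler0n.
have t2 : t ^+ 2 = 2 * ε by rewrite sqrtCK.
have U1 : 1 <= S^-1 by rewrite invf_ge1.
split => //.
case: (real_leP (@real1 C) (ger0_real t0)) => h.
  apply: le_trans (_ : _ <= 0) ler01; apply: mulr_le0_ge0; first by rewrite subr_le0.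
  exact: le_trans ler01 U1.
rewrite ler_pdivrMr // mul1r.
rewrite -(ler_pXn2r (n:=2)) ?nnegrE ?subr_ge0 ?(ltW h) ?(ltW S0) //.
apply: le_trans S2.
rewrite -subr_ge0.
have h2 : (0 : C) < 2 by rewrite ltr0n.
rewrite -(pmulr_rge0 _ h2).
have -> : 2 * (1 - ε - (1 - t) ^+ 2) = t * (4 - 3 * t) - (2 * ε - t ^+ 2) by ring.
rewrite t2 subrr subr0 mulr_ge0 // subr_ge0.
apply: le_trans (_ : 3 * 1 <= 4); last by rewrite mulr1 ler_nat.
by rewrite ler_wpM2l ?ler0n // ltW.
Qed.

Lemma lemB N (e : nat -> C) (n2 : C) : (forall k, (1 <= k < N)%N -> 0 <= e k < 1) ->
  0 <= n2 -> (1 + 1) * (1 - \sum_(1 <= k < N) e k) <= 1 + n2 ->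
  1 - sqrtC (2 * \sum_(1 <= k < N) e k) <= sqrtC n2.
Proof.
move=> He n2ge hn.
have eps0 := sum_e_ge0 He.
move: hn eps0.
set ε := \sum_(1 <= k < N) e k.
set t := sqrtC (2 * ε).
move=> hn eps0.
have t0 : 0 <= t by rewrite sqrtC_ge0 mulr_ge0 // ler0n.
have t2 : t ^+ 2 = 2 * ε by rewrite sqrtCK.
case: (real_leP (@real1 C) (ger0_real t0)) => h.
  by apply: le_trans (_ : _ <= 0) _; [rewrite subr_le0 | rewrite sqrtC_ge0].
rewrite -(sqrCK (x := 1 - t)) ?subr_ge0 ?(ltW h) //.
rewrite ler_sqrtC ?nnegrE ?exprn_ge0 ?subr_ge0 ?(ltW h) //.
have h' : 1 - 2 * ε <= n2.
  rewrite -(lerD2l 1); apply: le_trans hn; rewrite le_eqVlt; apply/orP; left; apply/eqP; ring.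
apply: le_trans h'.
rewrite -t2 -subr_ge0.
have -> : 1 - t ^+ 2 - (1 - t) ^+ 2 = 2 * t * (1 - t) by ring.
by rewrite !mulr_ge0 ?ler0n // subr_ge0 ltW.
Qed.

End Scalar2.

Section Scalar3.
Variable C : numClosedFieldType.

Lemma lemC (δ : C) : 0 < δ -> exists η : C, 0 < η /\
  forall N (e : nat -> C), (forall k, (1 <= k < N)%N -> 0 <= e k < 1) ->
  \sum_(1 <= k < N) e k < η ->
  `|(1 - sqrtC (2 * \sum_(1 <= k < N) e k)) * \prod_(1 <= k < N) (sqrtC (1 - e k))^-1 - 1| < δ /\
  `|\prod_(1 <= k < N) (sqrtC (1 - e k))^-1 - 1| < δ.
Proof.
move=> d0.
have d1 : 0 < 1 + δ by rewrite addr_gt0 ?ltr01.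
set r := δ / (1 + δ).
have r0 : 0 < r by rewrite divr_gt0.
have r1 : r < 1 by rewrite ltr_pdivrMr // mul1r ltrDr ltr01.
have rd : r < δ by rewrite ltr_pdivrMr // ltr_pMr // ltrDl.
have h2 : (0 : C) < 2 by rewrite ltr0n.
exists (r ^+ 2 / 2); split; first by rewrite divr_gt0 // exprn_gt0.
move=> N e He epsl.
have [U1 L1] := lemA He.
have [S0 S1 S2] := S_props He.
have eps0 := sum_e_ge0 He.
move: U1 L1 S0 S1 S2 eps0 epsl.
rewrite prodfV.
set S := \prod_(1 <= k < N) sqrtC (1 - e k).
set ε := \sum_(1 <= k < N) e k.
set t := sqrtC (2 * ε).
move=> U1 L1 S0 S1 S2 eps0 epsl.
rewrite ltr_pdivlMr // mulrC in epsl.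
have t0 : 0 <= t by rewrite sqrtC_ge0 mulr_ge0 // ler0n.
have tr : t < r.
  rewrite /t -(sqrCK (ltW r0)) ltr_sqrtC ?nnegrE ?exprn_ge0 ?mulr_ge0 ?ler0n ?(ltW r0) //; [exact: ltW d0 | by rewrite invr_ge0 ltW].
have t1 : t < 1 := lt_trans tr r1.
have r2 : r ^+ 2 < r by rewrite expr2 -[X in _ < X]mulr1 ltr_pM2l.
split.
  rewrite ler0_norm ?subr_le0 // opprB.
  apply: le_lt_trans (_ : _ <= 1 - (1 - t)) _; last by rewrite opprB addrC subrK (lt_trans tr rd).
  rewrite lerD2l lerN2; apply: ler_peMr => //; rewrite subr_ge0 ltW //.
rewrite ger0_norm ?subr_ge0 //.
apply: le_lt_trans (_ : _ <= 2 * ε) _; last first.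
  exact: lt_trans epsl (lt_trans r2 rd).
rewrite lerBlDl -[S^-1]mul1r ler_pdivrMr //.
have SS : 1 - ε <= S.
  apply: le_trans S2 _; rewrite expr2 -[X in _ <= X]mulr1 ler_wpM2l // ltW //.
have h : 2 * ε <= 1 by apply: ltW; apply: lt_trans epsl (lt_trans r2 r1).
have S2h : 1 <= 2 * S.
  apply: le_trans (_ : 1 <= 2 * (1 - ε)) _; last by rewrite ler_wpM2l ?ler0n.
  rewrite -subr_ge0.
  have -> : 2 * (1 - ε) - 1 = 1 - 2 * ε by ring.
  by rewrite subr_ge0.
have -> : (1 + 2 * ε) * S = S + ε * (2 * S) by ring.
apply: le_trans (_ : (1 - ε) + ε * 1 <= _); first by rewrite mulr1 subrK.
by apply: lerD => //; apply: ler_wpM2l.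
Qed.


End Scalar3.

Theorem theorem3 (C : numClosedFieldType) :
  (forall (N : nat) (chi : nat -> nat)
          (Gamma : forall k : nat, 'I_2 -> 'M[C]_(chi k, chi k.+1))
          (lam : forall k : nat, 'rV[C]_(chi k)) (chi' : nat),
     (0 < N)%N -> (0 < chi')%N ->
     vidal_canonical N Gamma lam ->
     norm2 N Gamma lam (id_bonds C chi) = 1 ->
     [/\ n_lower N lam chi' <= n_star N Gamma lam chi' <= n_upper N lam chi',
         n_lower N lam chi' <= 1 & 1 <= n_upper N lam chi'])
  /\
  (forall delta : C, 0 < delta ->
   exists eta : C, 0 < eta /\
     forall (N : nat) (chi : nat -> nat)
            (Gamma : forall k : nat, 'I_2 -> 'M[C]_(chi k, chi k.+1))
            (lam : forall k : nat, 'rV[C]_(chi k)) (chi' : nat),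
       (0 < N)%N -> (0 < chi')%N ->
       vidal_canonical N Gamma lam ->
       norm2 N Gamma lam (id_bonds C chi) = 1 ->
       eps_tot N lam chi' < eta ->
       `|n_lower N lam chi' - 1| < delta /\ `|n_upper N lam chi' - 1| < delta).
Proof.
split.
- move=> N chi Gamma lam chi' N0 c0 Hcan HI.
  have He : forall k, (1 <= k < N)%N -> 0 <= eps_i lam chi' k < 1.
    move=> k /andP [_ kN]; have [a b] := eps_bounds Hcan c0 (ltnW kN).
    by rewrite a b.
  have [U1 L1] := lemA He.
  have n2le := norm2_T_le1 Hcan chi'.
  have n2ge := @norm2_T_ge _ _ _ _ _ Hcan chi' HI.
  have n20 : 0 <= norm2 N Gamma lam (trunc_proj C N chi chi').
    by apply: sumr_ge0 => s _; exact: exprn_ge0.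
  have nT := lemB He n20 n2ge.
  have sn1 : sqrtC (norm2 N Gamma lam (trunc_proj C N chi chi')) <= 1.
    by rewrite -sqrtC1 ler_sqrtC ?nnegrE ?ler01.
  rewrite /n_lower /n_star /n_upper /nu /n_T /eps_tot.
  have U0 := le_trans ler01 U1.
  split => //; apply/andP; split.
    exact: ler_wpM2r U0 _ _ nT.
  exact: ler_piMl U0 sn1.
- move=> delta d0.
  have [eta [eta0 H]] := lemC d0.
  exists eta; split => // N chi Gamma lam chi' N0 c0 Hcan HI epsl.
  have He : forall k, (1 <= k < N)%N -> 0 <= eps_i lam chi' k < 1.
    move=> k /andP [_ kN]; have [a b] := eps_bounds Hcan c0 (ltnW kN).
    by rewrite a b.
  exact: H He epsl.
Qed.
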